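(* Let $q$ be a power of an odd prime, $r\ge1$ an integer, and $\mu\in\mathbb{F}_q$ such that $x^{2r+1}-\mu$ is irreducible in $\mathbb{F}_q[x]$. Then the number of $(z_0,\dots,z_{2r})\in\mathbb{F}_q^{2r+1}$ satisfying the system of $2r+1$ equations \[ \mu z_{l+r}^2+2\sum_{\{i,j\}\in U_{2l-1}}\mu_{\{i,j\}}z_iz_j=0\quad(1\le l\le r), \qquad z_l^2+2\sum_{\{i,j\}\in U_{2l}}\mu_{\{i,j\}}z_iz_j=0\quad(0\le l\le r), \] is at most $\frac{2r+5}{3}\,q^{\frac{4r}{3}+1}$.
   Context: For $0\le k\le 2r$, $U_k$ is the set of $2$-element subsets $\{i,j\}\subset\{0,1,\dots,2r\}$ (so $i\ne j$) with $i+j\equiv k\pmod{2r+1}$. For such a subset, $\mu_{\{i,j\}}=1$ if $1\le i+j\le 2r$ and $\mu_{\{i,j\}}=\mu$ if $2r+1\le i+j\le 4r-1$. *)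

(* Defs.v *)
From HB Require Import structures.
From mathcomp Require Import all_boot all_order all_algebra.
Set Implicit Arguments. Unset Strict Implicit. Unset Printing Implicit Defensive.
Import Order.TTheory GRing.Theory Num.Theory.
Local Open Scope ring_scope.

(* mu_{i,j} = 1 if i + j <= 2r, and mu otherwise (i + j >= 1 always holds
   for i <> j). *)
Definition mu_pair (F : fieldType) (r : nat) (mu : F) (i j : nat) : F :=
  if (i + j <= 2 * r)%N then 1 else mu.

Definition Usum (F : fieldType) (r : nat) (mu : F)
    (z : {ffun 'I_(2 * r).+1 -> F}) (k : nat) : F :=
  \sum_(i < (2 * r).+1) \sum_(j < (2 * r).+1 |
        (i < j)%N && ((i + j) %% (2 * r + 1) == k)%N)
     mu_pair r mu i j * z i * z j.

Definition lemma3p5_system (F : fieldType) (r : nat) (mu : F)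
    (z : {ffun 'I_(2 * r).+1 -> F}) : bool :=
  [forall l : 'I_r.+1,
     ((0 < l)%N ==>
        (mu * (z (inord (l + r))) ^+ 2 + 2 * Usum mu z (2 * l - 1) == 0))
     && ((z (inord l)) ^+ 2 + 2 * Usum mu z (2 * l) == 0)].

(* Main.v *)
Require Import Defs.
From HB Require Import structures.
From mathcomp Require Import all_boot all_order all_algebra.
From mathcomp Require Import zify ring.
Import GRing.Theory.
Local Open Scope ring_scope.

Lemma modn_lt2 (n s : nat) : (s < 2 * n)%N -> (s %% n = if s < n then s else s - n)%N.
Proof.
move=> h; case: ifP => hs; first by rewrite modn_small.
have -> : s = ((s - n) + n)%N by lia.
rewrite modnDr modn_small; lia.
Qed.

Section S.
Variables (F : fieldType) (r : nat) (mu : F).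
Local Notation n := (2 * r).+1.
Definition cc (z : 'I_n -> F) (k : nat) : F :=
  \sum_(i < n) \sum_(j < n | ((i + j) %% n == k)%N) mu_pair r mu i j * z i * z j.

Lemma cc_split (z : {ffun 'I_n -> F}) k :
  cc z k = \sum_(i < n) (if ((2 * i) %% n == k)%N then mu_pair r mu i i * z i * z i else 0)
           + 2 * Usum mu z k.
Proof.
rewrite /cc /Usum addn1.
set g := fun i j : 'I_n => mu_pair r mu i j * z i * z j.
set Q := fun i j : 'I_n => ((i + j) %% n == k)%N.
have gs : forall i j, g i j = g j i by move=> i j; rewrite /g /mu_pair addnC; ring.
have Qs : forall i j, Q i j = Q j i by move=> i j; rewrite /Q addnC.
have E : forall i j : 'I_n, (if Q i j then g i j else 0) =
   (if Q i j && (i < j)%N then g i j else 0) + (if Q j i && (j < i)%N then g j i else 0)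
   + (if i == j then (if ((2 * i) %% n == k)%N then g i i else 0) else 0).
  move=> i j; rewrite -(Qs i j) -(gs i j).
  case: (ltngtP i j) => h.
  - have -> : (i == j) = false by apply/eqP => e; rewrite e ltnn in h.
    by rewrite andbT andbF !addr0.
  - have -> : (i == j) = false by apply/eqP => e; rewrite e ltnn in h.
    by rewrite andbT andbF add0r addr0.
  - have e : i = j := val_inj h; subst i.
    rewrite !andbF !add0r eqxx /Q; have -> : (2 * j = j + j)%N by lia.
    by [].
transitivity (\sum_(i < n) \sum_(j < n) ((if Q i j && (i < j)%N then g i j else 0) + (if Q j i && (j < i)%N then g j i else 0)
   + (if i == j then (if ((2 * i) %% n == k)%N then g i i else 0) else 0))).
  by apply: eq_bigr => i _; rewrite big_mkcond; apply: eq_bigr => j _; exact: E.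
under eq_bigr do rewrite !big_split /=.
rewrite !big_split /=.
have -> : \sum_(i < n) \sum_(j < n) (if Q j i && (j < i)%N then g j i else 0) =
          \sum_(i < n) \sum_(j < n) (if Q i j && (i < j)%N then g i j else 0).
  by rewrite exchange_big.
have -> : \sum_(i < n) \sum_(j < n) (if i == j then (if ((2 * i) %% n == k)%N then g i i else 0) else 0)
  = \sum_(i < n) (if ((2 * i) %% n == k)%N then g i i else 0).
  apply: eq_bigr => i _; rewrite -big_mkcond /=.
  rewrite (big_pred1 i) //= => j; by rewrite eq_sym.
have -> : \sum_(i < n) \sum_(j < n) (if Q i j && (i < j)%N then g i j else 0)
  = \sum_(i < n) \sum_(j < n | (i < j)%N && ((i + j) %% n == k)%N) g i j.
  by apply: eq_bigr => i _; rewrite [RHS]big_mkcond; apply: eq_bigr => j _; rewrite andbC.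
rewrite /g; ring.
Qed.
Section Poly.
Variable (z : 'I_(2 * r).+1 -> F).
Definition Pz : {poly F} := \sum_(i < n) z i *: 'X^i.

Lemma PzA : Pz * Pz = \sum_(i < n) \sum_(j < n) (z i * z j) *: 'X^(i + j).
Proof.
rewrite /Pz mulr_suml; apply: eq_bigr => i _; rewrite mulr_sumr; apply: eq_bigr => j _.
by rewrite -scalerAl -scalerAr scalerA exprD.
Qed.

Lemma PzB : \sum_(k < n) cc z k *: 'X^k =
  \sum_(i < n) \sum_(j < n) (mu_pair r mu i j * z i * z j) *: 'X^((i + j) %% n).
Proof.
under eq_bigr do rewrite /cc scaler_suml.
rewrite exchange_big; apply: eq_bigr => i _.
under eq_bigr do rewrite scaler_suml big_mkcond.
rewrite exchange_big; apply: eq_bigr => j _ /=.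
have hk : ((i + j) %% n < n)%N by rewrite ltn_pmod.
rewrite (bigD1 (Ordinal hk)) //= eqxx big1 ?addr0 // => k hk2.
case: eqP => // e; move: hk2; rewrite -val_eqE /= e eqxx //.
Qed.

Lemma PzC : ('X^n - mu%:P) %| Pz * Pz - \sum_(k < n) cc z k *: 'X^k.
Proof.
rewrite PzA PzB -sumrB; apply: (big_ind (fun x => ('X^n - mu%:P) %| x)); [exact: dvdp0 | exact: dvdp_add|].
move=> i _; rewrite -sumrB; apply: (big_ind (fun x => ('X^n - mu%:P) %| x)); [exact: dvdp0 | exact: dvdp_add|].
move=> j _; have hi := ltn_ord i; have hj := ltn_ord j; rewrite /mu_pair.
have hs : (i + j < 2 * n)%N by lia.
rewrite modn_lt2 //.
case: ifP => h1; case: ifP => h2; try lia.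
  by rewrite mul1r subrr dvdp0.
have -> : (i + j = (i + j - n) + n)%N by lia.
rewrite addnK exprD.
have -> : (z i * z j) *: ('X^(i + j - n) * 'X^n) - (mu * z i * z j) *: 'X^(i + j - n)
   = ((z i * z j) *: 'X^(i + j - n)) * ('X^n - mu%:P).
  rewrite mulrBr; congr (_ - _); first by rewrite scalerAl.
  by rewrite [RHS]mulrC mul_polyC scalerA; congr (_ *: _); ring.
exact: dvdp_mulIr.
Qed.
End Poly.

Lemma diag_uniq (i j : nat) : (i < n)%N -> (j < n)%N -> ((2 * i) %% n = (2 * j) %% n)%N -> i = j.
Proof.
move=> hi hj; rewrite !modn_lt2; try lia.
case: ifP => ?; case: ifP => ?; lia.
Qed.

Lemma sys_zero (z : {ffun 'I_n -> F}) :
  irreducible_poly ('X^n - mu%:P) -> lemma3p5_system mu z -> z = 0.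
Proof.
move=> irr /forallP sys.
have ck : forall k : 'I_n, cc z k = 0.
  move=> k; rewrite cc_split.
  have hk := ltn_ord k.
  have ek := odd_double_half k; rewrite -muln2 in ek.
  have [i0 [hi0 [hu v]]] : exists i0 : 'I_n, ((2 * i0) %% n == k)%N /\
      (forall i : 'I_n, ((2 * i) %% n == k)%N -> i = i0) /\
      (mu_pair r mu i0 i0 * z i0 * z i0 + 2 * Usum mu z k = 0).
    case: (odd k) ek => /= ek.
    - have hl : ((k./2).+1 < r.+1)%N by lia.
      have := sys (inord (k./2).+1); rewrite inordK //.
      case/andP => h1 _; move: h1 => /= /eqP h1.
      have hl2 : ((k./2).+1 + r < n)%N by lia.
      exists (inord ((k./2).+1 + r)); rewrite inordK //; split.
        apply/eqP; rewrite modn_lt2; last lia.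
        case: ifP => ?; lia.
      split.
        move=> i /eqP hi; apply: val_inj; rewrite /= inordK //.
        apply: diag_uniq => //; rewrite hi modn_lt2; last lia.
        case: ifP => ?; lia.
      have e1 : (2 * (k./2).+1 - 1 = k)%N by lia.
      rewrite e1 in h1.
      rewrite /mu_pair ?inordK // ifF; last lia.
      by rewrite -h1 expr2 mulrA.
    - have hl : (k./2 < r.+1)%N by lia.
      have := sys (inord k./2); rewrite inordK //.
      case/andP => _ /eqP h1.
      have hl2 : (k./2 < n)%N by lia.
      exists (inord k./2); rewrite inordK //; split.
        apply/eqP; rewrite modn_small; lia.
      split.
        move=> i /eqP hi; apply: val_inj; rewrite /= inordK //.
        apply: diag_uniq => //; rewrite hi modn_small; lia.
      have e1 : (2 * k./2 = k)%N by lia.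
      rewrite e1 in h1.
      rewrite /mu_pair ?inordK // ifT; last lia.
      by rewrite -h1 expr2 mul1r.
  rewrite (bigD1 i0) //= hi0 big1 ?addr0 //.
  move=> i ne; case: ifP => // /hu e; by rewrite e eqxx in ne.
have PzD : ('X^n - mu%:P) %| Pz z * Pz z.
  have := PzC z; rewrite big1 ?subr0 // => k _; by rewrite ck scale0r.
have hd : ('X^n - mu%:P) %| Pz z.
  apply/negPn/negP => nd.
  have cop : coprimep ('X^n - mu%:P) (Pz z) by rewrite irreducible_poly_coprime.
  by rewrite (Gauss_dvdpl _ cop) (negbTE nd) in PzD.
have ePz : Pz z = \poly_(i < n) z (inord i).
  by rewrite poly_def; apply: eq_bigr => i _; rewrite inord_val.
have Pz0 : Pz z = 0.
  apply/eqP; apply: contraT => nz.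
  have := dvdp_leq nz hd; rewrite size_XnsubC // ePz => h.
  by have := leq_trans h (size_poly _ _); rewrite ltnn.
apply/ffunP => i; rewrite ffunE.
have := congr1 (fun P : {poly F} => P`_i) Pz0; rewrite /= ePz coef_poly ltn_ord inord_val coef0.
by [].
Qed.
End S.

Theorem lemma3p5 (F : finFieldType) (r : nat) (mu : F) :
  odd #|F| -> (1 <= r)%N ->
  irreducible_poly ('X^(2 * r + 1) - mu%:P) ->
  (27 * #|[set z : {ffun 'I_(2 * r).+1 -> F} | lemma3p5_system mu z]| ^ 3
     <= (2 * r + 5) ^ 3 * #|F| ^ (4 * r + 3))%N.
Proof.
move=> _ _ irr; rewrite addn1 in irr.
have hs : (#|[set z : {ffun 'I_(2 * r).+1 -> F} | lemma3p5_system mu z]| <= 1)%N.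
  apply: (@leq_trans #|[set (0 : {ffun 'I_(2 * r).+1 -> F})]|); last by rewrite cards1.
  apply: subset_leq_card.
  apply/subsetP => z; rewrite !inE => h; apply/eqP; exact: sys_zero irr h.
have q0 : (0 < #|F| ^ (4 * r + 3))%N by rewrite expn_gt0; apply/orP; left; apply/card_gt0P; by exists 0.
move: hs q0.
set N := #|_|; set Q := (#|F| ^ _)%N => hs q0.
have h1 : (N ^ 3 <= 1)%N by rewrite -(exp1n 3) leq_exp2r.
have h2 : (27 <= (2 * r + 5) ^ 3)%N.
  apply: (@leq_trans (3 ^ 3)) => //; rewrite leq_exp2r //; lia.
apply: (@leq_trans 27); first by lia.
by apply: leq_trans h2 _; rewrite leq_pmulr.
Qed.
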